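(* Let $\alpha$ be a nonzero real number. Let $\gamma(t)=\Psi(u(t),v(t))$ be an $\alpha$-stationary curve in $\mathbb S^2$ which is not of constant curvature, parametrized by arc length $t$ and not passing through $N$. Then there is a constant $c>0$ such that, expressing $t$ and $v$ as functions of $u$, $$t(u)=\pm\int^u\frac{s^\alpha\sin(s)}{\sqrt{s^{2\alpha}\sin^2(s)-c^2}}\,ds,\qquad v(u)=\pm\int^u\frac{c}{\sin(s)\sqrt{s^{2\alpha}\sin^2(s)-c^2}}\,ds.$$
   Context: $\mathbb S^2\subset\mathbb R^3$ is the unit sphere with the Euclidean metric. It is parametrized by $\Psi(u,v)=(\sin u\cos v,\sin u\sin v,\cos u)$, and $N=(0,0,1)$. The spherical distance from $\Psi(u,v)$ to $N$ is $u\in(0,\pi)$, and the line element is $\sqrt{u'^2+\sin^2(u)v'^2}\,dt$. The energy is $$E_\alpha[\gamma]=\int u^\alpha\sqrt{u'^2+\sin^2(u)v'^2}\,dt.$$ An $\alpha$-stationary curve is a critical point of $E_\alpha$, i.e. $(u,v)$ satisfies its Euler–Lagrange equations. Equivalently, $\kappa=\alpha\langle\mathbf n,\xi\rangle/u$, with $\mathbf n=(\gamma'\times\gamma)/|\gamma'|$, $\kappa=\langle\gamma'',\mathbf n\rangle/|\gamma'|^2$, and $\xi=\Psi_u$. Throughout the paper, $\alpha\ne0$ and curves avoid $N$. Integrals $\int^u$ are indefinite. *)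

(* Defs.v *)
From Stdlib Require Import Reals.
From Coquelicot Require Import Coquelicot.
Open Scope R_scope.

Definition gx (u v : R -> R) (t : R) : R := sin (u t) * cos (v t).
Definition gy (u v : R -> R) (t : R) : R := sin (u t) * sin (v t).
Definition gz (u v : R -> R) (t : R) : R := cos (u t).

Definition lineW (u v : R -> R) (t : R) : R :=
  sqrt ((Derive u t)^2 + (sin (u t))^2 * (Derive v t)^2).

(* Euler-Lagrange equations of E_alpha[gamma] = \int u^alpha sqrt(u'^2+sin^2(u) v'^2) dt,
   Lagrangian L(u,v,u',v') = u^alpha W, on the open parameter interval (a,b). *)
Definition alpha_stationary (alpha a b : R) (u v : R -> R) : Prop :=
  (forall t, a < t < b ->
     is_derive (fun s => Rpower (u s) alpha * Derive u s / lineW u v s) t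
       (alpha * Rpower (u t) (alpha - 1) * lineW u v t
        + Rpower (u t) alpha * sin (u t) * cos (u t) * (Derive v t)^2 / lineW u v t)) /\
  (forall t, a < t < b ->
     is_derive (fun s => Rpower (u s) alpha * (sin (u s))^2 * Derive v s / lineW u v s) t 0).

Definition curvature (u v : R -> R) (t : R) : R :=
  let x := gx u v t in let y := gy u v t in let z := gz u v t in
  let x1 := Derive (gx u v) t in let y1 := Derive (gy u v) t in
  let z1 := Derive (gz u v) t in
  let x2 := Derive (Derive (gx u v)) t in let y2 := Derive (Derive (gy u v)) t in
  let z2 := Derive (Derive (gz u v)) t in
  let nrm := sqrt (x1^2 + y1^2 + z1^2) in
  let n1 := (y1 * z - z1 * y) / nrm in
  let n2 := (z1 * x - x1 * z) / nrm in
  let n3 := (x1 * y - y1 * x) / nrm in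
  (x2 * n1 + y2 * n2 + z2 * n3) / nrm^2.

(* Main.v *)
Require Import Defs.
From Stdlib Require Import Reals Lra.
From Coquelicot Require Import Coquelicot.
Open Scope R_scope.

Lemma loc_int a b t : a < t < b -> locally t (fun s => a < s < b).
Proof.
  intros [H1 H2]. assert (He: 0 < Rmin (t-a) (b-t)) by (apply Rmin_pos; lra).
  exists (mkposreal _ He). intros y Hy.
  change (Rabs (y - t) < Rmin (t-a) (b-t)) in Hy.
  pose proof (Rmin_l (t-a) (b-t)). pose proof (Rmin_r (t-a) (b-t)).
  apply Rabs_def2 in Hy. lra.
Qed.

Lemma cont_pt f x : ex_derive f x -> continuity_pt f x.
Proof. intros H. apply continuity_pt_filterlim. exact (ex_derive_continuous f x H). Qed.

Lemma const_der f a b : (forall t, a < t < b -> is_derive f t 0) ->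
  forall x y, a < x < b -> a < y < b -> f x = f y.
Proof.
  intros H x y Hx Hy.
  assert (Hm: a < Rmin x y) by (apply Rmin_glb_lt; lra).
  assert (HM: Rmax x y < b) by (apply Rmax_lub_lt; lra).
  destruct (MVT_gen f x y (fun _ => 0)) as [c [Hc Heq]].
  - intros z Hz. apply H. lra.
  - intros z Hz. apply cont_pt. exists 0. apply H. lra.
  - lra.
Qed.

Lemma sign_const g p q : (forall t, p <= t <= q -> continuity_pt g t) ->
  (forall t, p <= t <= q -> g t <> 0) -> p <= q -> 0 < g p * g q.
Proof.
  intros Hc Hn Hpq.
  assert (Gp: g p <> 0) by (apply Hn; lra).
  assert (Gq: g q <> 0) by (apply Hn; lra).
  destruct (Rle_lt_or_eq_dec _ _ Hpq) as [Hlt|Heq].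
  2:{ subst. assert (0 < g q * g q) by (apply Rsqr_pos_lt; auto). exact H. }
  destruct (Rtotal_order (g p) 0) as [A|[A|A]]; [|contradiction|];
  destruct (Rtotal_order (g q) 0) as [B|[B|B]]; try contradiction; try nra.
  - destruct (Ranalysis5.IVT_interv g p q Hc Hlt A B) as [z [Hz Hz0]].
    exfalso. apply (Hn z Hz Hz0).
  - destruct (Ranalysis5.IVT_interv (fun x => - g x) p q) as [z [Hz Hz0]].
    + intros z Hz. apply continuity_pt_opp. apply Hc; auto.
    + exact Hlt.
    + lra.
    + lra.
    + exfalso. apply (Hn z Hz). lra.
Qed.

Lemma curv0 a b (u v : R -> R) :
  (forall t, a < t < b ->
     ex_derive u t /\ ex_derive v t /\ ex_derive (Derive u) t /\ ex_derive (Derive v) t) ->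
  (forall t, a < t < b -> (Derive u t)^2 + (sin (u t))^2 * (Derive v t)^2 = 1) ->
  (forall t, a < t < b -> Derive v t = 0) ->
  forall t, a < t < b -> curvature u v t = 0.
Proof.
  intros Hreg Harc Hv t Ht.
  pose proof (loc_int a b t Ht) as Hloc.
  destruct (Hreg t Ht) as [Du [Dv [DDu DDv]]].
  assert (Hu1: Derive u t ^ 2 = 1).
  { rewrite <- (Harc t Ht), (Hv t Ht). ring. }
  assert (Hu2: Derive (Derive u) t = 0).
  { assert (E1: is_derive (fun s => Derive u s ^ 2) t (2 * Derive u t * Derive (Derive u) t)).
    { auto_derive. auto. change (Derive (fun x : R => Derive u x) t) with (Derive (Derive u) t). ring. }
    assert (E2: is_derive (fun s => Derive u s ^ 2) t 0).
    { apply (is_derive_ext_loc (fun _ => 1)). 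
      - eapply filter_imp; [|exact Hloc]. intros s Hs. cbv beta. pose proof (Harc s Hs) as E. rewrite (Hv s Hs) in E. nra.
      - auto_derive; auto. }
    pose proof (is_derive_unique _ _ _ E1). pose proof (is_derive_unique _ _ _ E2).
    assert (Hne: Derive u t <> 0) by (intro Z; rewrite Z in Hu1; simpl in Hu1; lra).
    assert (2 * Derive u t * Derive (Derive u) t = 0) by congruence.
    apply Rmult_integral in H1. destruct H1; [|auto]. lra. }
  assert (Lx: forall s, a < s < b -> Derive (gx u v) s = cos (u s) * Derive u s * cos (v s)).
  { intros s Hs. destruct (Hreg s Hs) as [Du' [Dv' _]]. apply is_derive_unique. unfold gx.
    auto_derive. auto. change (fun x : R => u x) with u. change (fun x : R => v x) with v.
    rewrite (Hv s Hs). ring. }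
  assert (Ly: forall s, a < s < b -> Derive (gy u v) s = cos (u s) * Derive u s * sin (v s)).
  { intros s Hs. destruct (Hreg s Hs) as [Du' [Dv' _]]. apply is_derive_unique. unfold gy.
    auto_derive. auto. change (fun x : R => u x) with u. change (fun x : R => v x) with v.
    rewrite (Hv s Hs). ring. }
  assert (Lz: forall s, a < s < b -> Derive (gz u v) s = - sin (u s) * Derive u s).
  { intros s Hs. destruct (Hreg s Hs) as [Du' [Dv' _]]. apply is_derive_unique. unfold gz.
    auto_derive. auto. change (fun x : R => u x) with u. ring. }
  assert (Hdd: Derive u t * Derive u t = 1) by (simpl in Hu1; lra).
  assert (X2: Derive (Derive (gx u v)) t = - gx u v t).
  { rewrite (Derive_ext_loc (Derive (gx u v)) (fun s => cos (u s) * Derive u s * cos (v s))).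
    2:{ eapply filter_imp; [|exact Hloc]. intros s Hs. apply Lx; auto. }
    apply is_derive_unique. auto_derive. auto.
    change (fun x : R => u x) with u. change (fun x : R => v x) with v.
    change (fun x : R => Derive u x) with (Derive u).
    rewrite (Hv t Ht), Hu2. unfold gx.
    transitivity (- (sin (u t) * cos (v t)) * (Derive u t * Derive u t)); [ring | rewrite Hdd; ring]. }
  assert (Y2: Derive (Derive (gy u v)) t = - gy u v t).
  { rewrite (Derive_ext_loc (Derive (gy u v)) (fun s => cos (u s) * Derive u s * sin (v s))).
    2:{ eapply filter_imp; [|exact Hloc]. intros s Hs. apply Ly; auto. }
    apply is_derive_unique. auto_derive. auto.
    change (fun x : R => u x) with u. change (fun x : R => v x) with v.
    change (fun x : R => Derive u x) with (Derive u).
    rewrite (Hv t Ht), Hu2. unfold gy.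
    transitivity (- (sin (u t) * sin (v t)) * (Derive u t * Derive u t)); [ring | rewrite Hdd; ring]. }
  assert (Z2: Derive (Derive (gz u v)) t = - gz u v t).
  { rewrite (Derive_ext_loc (Derive (gz u v)) (fun s => - sin (u s) * Derive u s)).
    2:{ eapply filter_imp; [|exact Hloc]. intros s Hs. apply Lz; auto. }
    apply is_derive_unique. auto_derive. auto.
    change (fun x : R => u x) with u.
    change (fun x : R => Derive u x) with (Derive u).
    rewrite Hu2. unfold gz.
    transitivity (- (cos (u t)) * (Derive u t * Derive u t)); [ring | rewrite Hdd; ring]. }
  unfold curvature. cbv zeta. rewrite X2, Y2, Z2. unfold Rdiv. ring.
Qed.

Definition fI (al c : R) := fun s => Rpower s al * sin s / sqrt (Rpower s (2 * al) * (sin s)^2 - c^2).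
Definition kI (al c : R) := fun s => c / (sin s * sqrt (Rpower s (2 * al) * (sin s)^2 - c^2)).

Lemma fI_cont al c s : 0 < s -> sin s <> 0 -> 0 < Rpower s (2*al) * sin s ^ 2 - c ^ 2 ->
  continuous (fI al c) s.
Proof.
  intros H1 H2 H3. unfold fI. apply (@ex_derive_continuous R_AbsRing R_NormedModule).
  unfold Rpower in *. simpl in H3. auto_derive.
  repeat split; try lra. apply Rgt_not_eq, sqrt_lt_R0. lra.
Qed.

Lemma kI_cont al c s : 0 < s -> sin s <> 0 -> 0 < Rpower s (2*al) * sin s ^ 2 - c ^ 2 ->
  continuous (kI al c) s.
Proof.
  intros H1 H2 H3. unfold kI. apply (@ex_derive_continuous R_AbsRing R_NormedModule).
  unfold Rpower in *. simpl in H3. auto_derive.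
  repeat split; try lra. apply Rmult_integral_contrapositive. split; auto.
  apply Rgt_not_eq, sqrt_lt_R0. lra.
Qed.

Lemma alg p s d w c0 e1 :
  0 < p -> 0 < s -> p * s^2 * w = c0 -> d^2 + s^2 * w^2 = 1 -> (e1 = 1 \/ e1 = -1) ->
  p^2 * s^2 - (Rabs c0)^2 = (p * s * (e1 * d))^2.
Proof.
  intros Hp Hs Hc Hd He. rewrite pow2_abs. subst c0.
  assert (Hd2: d^2 = 1 - s^2 * w^2) by lra.
  destruct He as [-> | ->].
  - replace ((p * s * (1 * d))^2) with (p^2 * s^2 * d^2) by ring. rewrite Hd2. ring.
  - replace ((p * s * (-1 * d))^2) with (p^2 * s^2 * d^2) by ring. rewrite Hd2. ring.
Qed.

Lemma between a b t0 t1 x : a < t0 < b -> a < t1 < b -> Rmin t0 t1 <= x <= Rmax t0 t1 -> a < x < b.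
Proof.
  intros H0 H1 Hx.
  assert (a < Rmin t0 t1) by (apply Rmin_glb_lt; lra).
  assert (Rmax t0 t1 < b) by (apply Rmax_lub_lt; lra). lra.
Qed.

Lemma core alpha a' b' (u v : R -> R) c0 e1 e0 :
 (forall t, a' < t < b' -> 0 < u t < PI) ->
 (forall t, a' < t < b' -> ex_derive u t /\ ex_derive v t /\ ex_derive (Derive u) t /\ ex_derive (Derive v) t) ->
 (forall t, a' < t < b' -> (Derive u t)^2 + (sin (u t))^2 * (Derive v t)^2 = 1) ->
 (forall t, a' < t < b' -> Rpower (u t) alpha * sin (u t)^2 * Derive v t = c0) ->
 (e1 = 1 \/ e1 = -1) -> (e0 = 1 \/ e0 = -1) ->
 (forall t, a' < t < b' -> 0 < e1 * Derive u t) -> Rabs c0 = e0 * c0 ->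
 forall t0 t1, a' < t0 < b' -> a' < t1 < b' ->
   t1 - t0 = e1 * RInt (fI alpha (Rabs c0)) (u t0) (u t1) /\
   v t1 - v t0 = (e0 * e1) * RInt (kI alpha (Rabs c0)) (u t0) (u t1).
Proof.
  intros Hu Hreg Harc HF He1 He0 Hsg Hc t0 t1 H0 H1.
  assert (P1: forall t, a' < t < b' ->
    Rpower (u t) (2*alpha) * sin (u t)^2 - (Rabs c0)^2
      = (Rpower (u t) alpha * sin (u t) * (e1 * Derive u t))^2).
  { intros t Ht. replace (2*alpha) with (alpha+alpha) by ring. rewrite Rpower_plus.
    rewrite <- (alg (Rpower (u t) alpha) (sin (u t)) (Derive u t) (Derive v t) c0 e1).
    - ring.
    - unfold Rpower; apply exp_pos.
    - apply sin_gt_0; apply Hu; auto.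
    - apply HF; auto.
    - apply Harc; auto.
    - auto. }
  assert (Pos: forall t, a' < t < b' ->
    0 < Rpower (u t) alpha /\ 0 < sin (u t) /\ 0 < Rpower (u t) alpha * sin (u t) * (e1 * Derive u t)).
  { intros t Ht. assert (0 < Rpower (u t) alpha) by (unfold Rpower; apply exp_pos).
    assert (0 < sin (u t)) by (apply sin_gt_0; apply Hu; auto).
    pose proof (Hsg t Ht). split; auto. split; auto.
    apply Rmult_lt_0_compat; auto. apply Rmult_lt_0_compat; auto. }
  assert (Arg: forall t, a' < t < b' -> 0 < Rpower (u t) (2*alpha) * sin (u t)^2 - (Rabs c0)^2).
  { intros t Ht. rewrite (P1 t Ht). destruct (Pos t Ht) as [_ [_ Q]]. apply pow_lt. auto. }
  assert (P2: forall t, a' < t < b' -> Derive u t * fI alpha (Rabs c0) (u t) = e1).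
  { intros t Ht. unfold fI. rewrite (P1 t Ht), sqrt_pow2.
    2:{ destruct (Pos t Ht) as [_ [_ Q]]. lra. }
    destruct (Pos t Ht) as [A [B Q]]. pose proof (Hsg t Ht).
    destruct He1 as [-> | ->]; field; split; lra. }
  assert (P3: forall t, a' < t < b' -> Derive v t = (e0 * e1) * (Derive u t * kI alpha (Rabs c0) (u t))).
  { intros t Ht. destruct (Pos t Ht) as [A [B Q]]. pose proof (Hsg t Ht).
    assert (Hw: Derive v t = c0 / (Rpower (u t) alpha * sin (u t)^2)).
    { rewrite <- (HF t Ht). field. split; lra. }
    rewrite Hw. unfold kI. rewrite (P1 t Ht), sqrt_pow2 by lra. rewrite Hc.
    destruct He1 as [-> | ->]; destruct He0 as [-> | ->]; field; repeat split; lra. }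
  assert (Hin: forall x, Rmin t0 t1 <= x <= Rmax t0 t1 -> a' < x < b').
  { intros x Hx. apply (between a' b' t0 t1 x); auto. }
  assert (Hder: forall x, Rmin t0 t1 <= x <= Rmax t0 t1 -> is_derive u x (Derive u x) /\ continuous (Derive u) x).
  { intros x Hx. destruct (Hreg x (Hin x Hx)) as [Du [Dv [DDu DDv]]]. split.
    - apply Derive_correct; auto.
    - apply (@ex_derive_continuous R_AbsRing R_NormedModule). auto. }
  split.
  - assert (HC := is_RInt_comp (fI alpha (Rabs c0)) u (Derive u) t0 t1).
    assert (HC' : is_RInt (fun _ => e1) t0 t1 (RInt (fI alpha (Rabs c0)) (u t0) (u t1))).
    { apply is_RInt_ext with (fun y => scal (Derive u y) (fI alpha (Rabs c0) (u y))).
      - intros x Hx. apply P2. apply Hin. lra.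
      - apply HC; auto. intros x Hx. pose proof (Hin x Hx) as Hx'.
        apply fI_cont.
        + apply Hu; auto.
        + destruct (Pos x Hx') as [_ [B _]]. lra.
        + apply Arg; auto. }
    pose proof (is_RInt_unique _ _ _ _ HC') as E1.
    pose proof (is_RInt_unique _ _ _ _ (is_RInt_const t0 t1 e1)) as E2.
    rewrite E1 in E2. rewrite E2. change (scal (t1 - t0) e1) with ((t1 - t0) * e1).
    destruct He1 as [-> | ->]; ring.
  - assert (HC := is_RInt_comp (kI alpha (Rabs c0)) u (Derive u) t0 t1).
    assert (HC' : is_RInt (Derive v) t0 t1 (scal (e0 * e1) (RInt (kI alpha (Rabs c0)) (u t0) (u t1)))).
    { apply is_RInt_ext with (fun y => scal (e0 * e1) (scal (Derive u y) (kI alpha (Rabs c0) (u y)))).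
      - intros x Hx. symmetry. apply P3. apply Hin. lra.
      - apply (@is_RInt_scal R_NormedModule). apply HC; auto. intros x Hx. pose proof (Hin x Hx) as Hx'.
        apply kI_cont.
        + apply Hu; auto.
        + destruct (Pos x Hx') as [_ [B _]]. lra.
        + apply Arg; auto. }
    assert (HD : is_RInt (Derive v) t0 t1 (minus (v t1) (v t0))).
    { apply (@is_RInt_derive R_CompleteNormedModule).
      - intros x Hx. destruct (Hreg x (Hin x Hx)) as [Du [Dv [DDu DDv]]]. apply Derive_correct; auto.
      - intros x Hx. destruct (Hreg x (Hin x Hx)) as [Du [Dv [DDu DDv]]].
        apply (@ex_derive_continuous R_AbsRing R_NormedModule). auto. }
    pose proof (is_RInt_unique _ _ _ _ HC') as E1.
    pose proof (is_RInt_unique _ _ _ _ HD) as E2.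
    rewrite E1 in E2. change (minus (v t1) (v t0)) with (v t1 - v t0) in E2. rewrite <- E2. reflexivity.
Qed.

Theorem theorem3p6 (alpha a b : R) (u v : R -> R) :
  alpha <> 0 -> a < b ->
  (* avoids N (and u stays in the chart range (0,pi)) *)
  (forall t, a < t < b -> 0 < u t < PI) ->
  (* regularity: u, v twice differentiable *)
  (forall t, a < t < b ->
     ex_derive u t /\ ex_derive v t /\ ex_derive (Derive u) t /\ ex_derive (Derive v) t) ->
  (* arc-length parametrization *)
  (forall t, a < t < b -> (Derive u t)^2 + (sin (u t))^2 * (Derive v t)^2 = 1) ->
  alpha_stationary alpha a b u v ->
  (* not of constant curvature *)
  ~ (exists k, forall t, a < t < b -> curvature u v t = k) ->
  exists c, 0 < c /\
    forall a' b', a <= a' -> a' < b' -> b' <= b ->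
      (forall t, a' < t < b' -> Derive u t <> 0) ->
      exists e1 e2, (e1 = 1 \/ e1 = -1) /\ (e2 = 1 \/ e2 = -1) /\
        forall t0 t1, a' < t0 < b' -> a' < t1 < b' ->
          t1 - t0 = e1 * RInt (fun s => Rpower s alpha * sin s
                          / sqrt (Rpower s (2 * alpha) * (sin s)^2 - c^2)) (u t0) (u t1)
          /\ v t1 - v t0 = e2 * RInt (fun s => c
                          / (sin s * sqrt (Rpower s (2 * alpha) * (sin s)^2 - c^2))) (u t0) (u t1).
Proof.
  intros Hal Hab Hu Hreg Harc [_ Hst2] Hcurv.
  assert (W1: forall t, a < t < b -> lineW u v t = 1).
  { intros t Ht. unfold lineW. rewrite (Harc t Ht). apply sqrt_1. }
  set (m := (a+b)/2). assert (Hm: a < m < b) by (unfold m; lra).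
  pose proof (const_der _ a b Hst2) as HK.
  set (c0 := Rpower (u m) alpha * (sin (u m))^2 * Derive v m / lineW u v m).
  assert (HF: forall t, a < t < b -> Rpower (u t) alpha * sin (u t)^2 * Derive v t = c0).
  { intros t Ht. unfold c0. rewrite <- (HK t m Ht Hm). rewrite (W1 t Ht). field. }
  assert (Hc0: c0 <> 0).
  { intro Z. apply Hcurv. exists 0. apply (curv0 a b u v Hreg Harc). intros t Ht.
    pose proof (HF t Ht) as H. rewrite Z in H.
    assert (0 < Rpower (u t) alpha) by (unfold Rpower; apply exp_pos).
    assert (0 < sin (u t)) by (apply sin_gt_0; apply Hu; auto).
    apply Rmult_integral in H. destruct H as [H|H]; auto.
    exfalso. assert (0 < Rpower (u t) alpha * sin (u t) ^ 2) by (apply Rmult_lt_0_compat; auto; apply pow_lt; auto).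
    lra. }
  exists (Rabs c0). split; [apply Rabs_pos_lt; auto|].
  intros a' b' Ha' Hab' Hb' Hnz.
  set (m' := (a'+b')/2). assert (Hm': a' < m' < b') by (unfold m'; lra).
  assert (Hsub: forall t, a' < t < b' -> a < t < b) by (intros; lra).
  assert (HS: forall t, a' < t < b' -> 0 < Derive u m' * Derive u t).
  { intros t Ht. destruct (Rle_dec t m').
    - rewrite Rmult_comm. apply sign_const; try lra.
      + intros x Hx. apply cont_pt. apply Hreg. lra.
      + intros x Hx. apply Hnz. lra.
    - apply sign_const; try lra.
      + intros x Hx. apply cont_pt. apply Hreg. lra.
      + intros x Hx. apply Hnz. lra. }
  assert (HE1: exists e1, (e1 = 1 \/ e1 = -1) /\ forall t, a' < t < b' -> 0 < e1 * Derive u t).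
  { destruct (Rlt_dec 0 (Derive u m')) as [P|P].
    - exists 1. split; auto. intros t Ht. pose proof (HS t Ht). nra.
    - exists (-1). split; auto. intros t Ht. pose proof (HS t Ht).
      pose proof (Hnz m' Hm'). nra. }
  assert (HE0: exists e0, (e0 = 1 \/ e0 = -1) /\ Rabs c0 = e0 * c0).
  { destruct (Rle_dec 0 c0).
    - exists 1. split; auto. rewrite Rabs_pos_eq; lra.
    - exists (-1). split; auto. rewrite Rabs_left; lra. }
  destruct HE1 as [e1 [He1 Hsg]]. destruct HE0 as [e0 [He0 Hc]].
  exists e1, (e0 * e1). split; auto. split.
  { destruct He1 as [-> | ->]; destruct He0 as [-> | ->]; [left|right|right|left]; ring. }
  intros t0 t1 H0 H1.
  apply (core alpha a' b' u v c0 e1 e0); auto.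
Qed.
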